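(* Let $\mathcal{L}$ and $\mathcal{K}$ be $2$-categories with pseudolimits of arrows, and let $U\colon\mathcal{L}\to\mathcal{K}$ be a $2$-functor preserving pseudolimits of arrows such that each functor $U\colon\mathcal{L}(A,B)\to\mathcal{K}(UA,UB)$ on hom-categories is a discrete isofibration of categories. Then $U$ reflects representable isofibrations and normal isofibrations. Furthermore, the following are equivalent: (1) $U$ reflects equivalences; (2) $U$ reflects retract equivalences; (3) $U$ reflects normal retract equivalences; and these together imply (4) $U$ reflects injective equivalences.
   Context: A functor is a discrete isofibration of categories if every isomorphism with codomain in the image has a unique lift with the given codomain. An equivalence is a morphism $f\colon A\to B$ with $g\colon B\to A$ and invertible $2$-cells $1\cong gf$, $fg\cong 1$; an injective equivalence is an equivalence with a retraction; a retract equivalence is an equivalence with a section; a normal retract equivalence is a retract equivalence which is also a normal isofibration. The pseudolimit of an arrow $f\colon A\to B$ is an object $L_f$ with $u_f\colon L_f\to A$, $v_f\colon L_f\to B$ and invertible $\lambda_f\colon v_f\cong fu_f$, universal among such data; $U$ preserves it if its image is a pseudolimit of $Uf$. $U$ reflects a property if whenever $Uf$ has it, so does $f$. A morphism $f\colon A\to B$ is a representable isofibration if for every object $X$, given $g\colon X\to A$, $h\colon X\to B$ and invertible $\alpha\colon fg\cong h$, there exist $h'\colon X\to A$ and invertible $\alpha'\colon g\cong h'$ with $f\alpha'=\alpha$. A cleavage is a choice of such $(\alpha',h')$ for every $(g,\alpha,h)$, natural in $X$; it is normal if $\alpha'$ is an identity whenever $\alpha$ is. A normal isofibration is a representable isofibration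 admitting a normal cleavage. *)

(* Defs.v *)
(** Vertical composition [vcomp b a] (= b . a, "a then b") is total but only
    meaningful when [tgt a = src b]; whiskering on both sides. *)

Record TwoCatData := {
  obj : Type;
  hom : obj -> obj -> Type;
  cell : obj -> obj -> Type;
  src : forall A B, cell A B -> hom A B;
  tgt : forall A B, cell A B -> hom A B;
  id1 : forall A, hom A A;
  comp1 : forall A B C, hom B C -> hom A B -> hom A C;
  id2 : forall A B, hom A B -> cell A B;
  vcomp : forall A B, cell A B -> cell A B -> cell A B;
  lwhisk : forall A B C, hom B C -> cell A B -> cell A C;
  rwhisk : forall A B C, cell B C -> hom A B -> cell A C
}.

Arguments obj : clear implicits.
Arguments hom {_} _ _.
Arguments cell {_} _ _.
Arguments src {_ _ _} _.
Arguments tgt {_ _ _} _.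
Arguments id1 {_} _.
Arguments comp1 {_ _ _ _} _ _.
Arguments id2 {_ _ _} _.
Arguments vcomp {_ _ _} _ _.
Arguments lwhisk {_ _ _ _} _ _.
Arguments rwhisk {_ _ _ _} _ _.

Definition is_2cat (CC : TwoCatData) : Prop :=
  (forall (A B : obj CC) (f : hom A B), comp1 f (id1 A) = f) /\
  (forall (A B : obj CC) (f : hom A B), comp1 (id1 B) f = f) /\
  (forall (A B C D : obj CC) (f : hom A B) (g : hom B C) (h : hom C D),
      comp1 h (comp1 g f) = comp1 (comp1 h g) f) /\
  (forall (A B : obj CC) (f : hom A B), src (id2 f) = f /\ tgt (id2 f) = f) /\
  (forall (A B : obj CC) (a b : cell A B), tgt a = src b ->
      src (vcomp b a) = src a /\ tgt (vcomp b a) = tgt b) /\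
  (forall (A B : obj CC) (a : cell A B), vcomp a (id2 (src a)) = a) /\
  (forall (A B : obj CC) (a : cell A B), vcomp (id2 (tgt a)) a = a) /\
  (forall (A B : obj CC) (a b c : cell A B), tgt a = src b -> tgt b = src c ->
      vcomp c (vcomp b a) = vcomp (vcomp c b) a) /\
  (forall (A B C : obj CC) (h : hom B C) (a : cell A B),
      src (lwhisk h a) = comp1 h (src a) /\ tgt (lwhisk h a) = comp1 h (tgt a)) /\
  (forall (A B C : obj CC) (a : cell B C) (k : hom A B),
      src (rwhisk a k) = comp1 (src a) k /\ tgt (rwhisk a k) = comp1 (tgt a) k) /\
  (forall (A B C : obj CC) (h : hom B C) (f : hom A B), lwhisk h (id2 f) = id2 (comp1 h f)) /\
  (forall (A B C : obj CC) (f : hom B C) (k : hom A B), rwhisk (id2 f) k = id2 (comp1 f k)) /\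
  (forall (A B C : obj CC) (h : hom B C) (a b : cell A B), tgt a = src b ->
      lwhisk h (vcomp b a) = vcomp (lwhisk h b) (lwhisk h a)) /\
  (forall (A B C : obj CC) (a b : cell B C) (k : hom A B), tgt a = src b ->
      rwhisk (vcomp b a) k = vcomp (rwhisk b k) (rwhisk a k)) /\
  (forall (A B : obj CC) (a : cell A B), lwhisk (id1 B) a = a) /\
  (forall (A B : obj CC) (a : cell A B), rwhisk a (id1 A) = a) /\
  (forall (A B C D : obj CC) (h : hom B C) (h' : hom C D) (a : cell A B),
      lwhisk (comp1 h' h) a = lwhisk h' (lwhisk h a)) /\
  (forall (A B C D : obj CC) (k' : hom A B) (k : hom B C) (a : cell C D),
      rwhisk a (comp1 k k') = rwhisk (rwhisk a k) k') /\
  (forall (A B C D : obj CC) (k : hom A B) (a : cell B C) (h : hom C D),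
      lwhisk h (rwhisk a k) = rwhisk (lwhisk h a) k) /\
  (forall (A B C : obj CC) (a : cell A B) (b : cell B C),
      vcomp (lwhisk (tgt b) a) (rwhisk b (src a))
      = vcomp (rwhisk b (tgt a)) (lwhisk (src b) a)).

Record TwoCat := { tc_data :> TwoCatData; tc_ax : is_2cat tc_data }.

Definition invertible {C : TwoCatData} {A B : obj C} (a : cell A B) : Prop :=
  exists b : cell A B, src b = tgt a /\ tgt b = src a /\
    vcomp b a = id2 (src a) /\ vcomp a b = id2 (tgt a).

Record TwoFunctorData (L K : TwoCat) := {
  F0 : obj L -> obj K;
  F1 : forall A B : obj L, hom A B -> hom (F0 A) (F0 B);
  F2 : forall A B : obj L, cell A B -> cell (F0 A) (F0 B)
}.
Arguments F0 {_ _} _ _.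
Arguments F1 {_ _} _ {_ _} _.
Arguments F2 {_ _} _ {_ _} _.

Definition is_2functor {L K : TwoCat} (U : TwoFunctorData L K) : Prop :=
    (forall A : obj L, F1 U (id1 A) = id1 (F0 U A)) /\
    (forall (A B C : obj L) (g : hom B C) (f : hom A B),
        F1 U (comp1 g f) = comp1 (F1 U g) (F1 U f)) /\
    (forall (A B : obj L) (a : cell A B),
        src (F2 U a) = F1 U (src a) /\ tgt (F2 U a) = F1 U (tgt a)) /\
    (forall (A B : obj L) (f : hom A B), F2 U (id2 f) = id2 (F1 U f)) /\
    (forall (A B : obj L) (a b : cell A B), tgt a = src b ->
        F2 U (vcomp b a) = vcomp (F2 U b) (F2 U a)) /\
    (forall (A B C : obj L) (h : hom B C) (a : cell A B),
        F2 U (lwhisk h a) = lwhisk (F1 U h) (F2 U a)) /\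
    (forall (A B C : obj L) (a : cell B C) (k : hom A B),
        F2 U (rwhisk a k) = rwhisk (F2 U a) (F1 U k)).

Record TwoFunctor (L K : TwoCat) :=
  { tf_data :> TwoFunctorData L K; tf_ax : is_2functor tf_data }.

Definition hom_discrete_isofibrations {L K : TwoCat} (U : TwoFunctor L K) : Prop :=
  forall (A B : obj L) (f : hom A B) (t : cell (F0 U A) (F0 U B)),
    tgt t = F1 U f -> invertible t ->
    exists! a : cell A B, tgt a = f /\ invertible a /\ F2 U a = t.

(** * Pseudolimits of arrows
    (P, u, v, lam : v => f u invertible) such that for every X the functor
    C(X,P) -> PsCone(X) is an isomorphism of categories. *)
Definition is_pseudolimit {C : TwoCatData} {A B : obj C} (f : hom A B)
    (P : obj C) (u : hom P A) (v : hom P B) (lam : cell P B) : Prop :=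
  src lam = v /\ tgt lam = comp1 f u /\ invertible lam /\
  (* bijection on objects *)
  (forall X (a : hom X A) (b : hom X B) (be : cell X B),
      src be = b -> tgt be = comp1 f a -> invertible be ->
      exists! m : hom X P, comp1 u m = a /\ comp1 v m = b /\ rwhisk lam m = be) /\
  (* bijection on morphisms *)
  (forall X (m m' : hom X P) (phi : cell X A) (psi : cell X B),
      src phi = comp1 u m -> tgt phi = comp1 u m' ->
      src psi = comp1 v m -> tgt psi = comp1 v m' ->
      vcomp (lwhisk f phi) (rwhisk lam m) = vcomp (rwhisk lam m') psi ->
      exists! s : cell X P, src s = m /\ tgt s = m' /\
        lwhisk u s = phi /\ lwhisk v s = psi).

Definition has_pseudolimits_of_arrows (C : TwoCat) : Prop :=
  forall (A B : obj C) (f : hom A B),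
    exists P u v lam, @is_pseudolimit C A B f P u v lam.

Definition preserves_pseudolimits_of_arrows {L K : TwoCat} (U : TwoFunctor L K) : Prop :=
  forall (A B : obj L) (f : hom A B) P u v lam,
    is_pseudolimit f P u v lam ->
    is_pseudolimit (F1 U f) (F0 U P) (F1 U u) (F1 U v) (F2 U lam).

Definition repr_isofibration (C : TwoCat) (A B : obj C) (f : hom A B) : Prop :=
  forall X (g : hom X A) (h : hom X B) (al : cell X B),
    src al = comp1 f g -> tgt al = h -> invertible al ->
    exists (h' : hom X A) (al' : cell X A),
      src al' = g /\ tgt al' = h' /\ invertible al' /\ lwhisk f al' = al.

(** A cleavage chooses, for every (g, al : f g ~= h), a lift al' : g ~= h'
    (with h' = tgt al'); the 1-cell h = tgt al is determined by al. *)
Definition cleavage_data {C : TwoCat} {A B : obj C} (f : hom A B) : Type :=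
  forall X (g : hom X A) (al : cell X B),
    src al = comp1 f g -> invertible al -> cell X A.

Definition is_cleavage {C : TwoCat} {A B : obj C} (f : hom A B)
    (cl : cleavage_data f) : Prop :=
  (forall X g al (p : src al = comp1 f g) (q : invertible al),
      src (cl X g al p q) = g /\ invertible (cl X g al p q) /\
      lwhisk f (cl X g al p q) = al) /\
  (forall Y X (k : hom Y X) (g : hom X A) (al : cell X B)
          (p : src al = comp1 f g) (q : invertible al)
          (p' : src (rwhisk al k) = comp1 f (comp1 g k)) (q' : invertible (rwhisk al k)),
      cl Y (comp1 g k) (rwhisk al k) p' q' = rwhisk (cl X g al p q) k).

Definition is_normal_cleavage {C : TwoCat} {A B : obj C} (f : hom A B)
    (cl : cleavage_data f) : Prop :=
  is_cleavage f cl /\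
  (forall X (g : hom X A) (p : src (id2 (comp1 f g)) = comp1 f g)
          (q : invertible (id2 (comp1 f g))),
      cl X g (id2 (comp1 f g)) p q = id2 g).

Definition normal_isofibration (C : TwoCat) (A B : obj C) (f : hom A B) : Prop :=
  repr_isofibration C A B f /\ exists cl : cleavage_data f, is_normal_cleavage f cl.

Definition equivalence (C : TwoCat) (A B : obj C) (f : hom A B) : Prop :=
  exists (g : hom B A) (eta : cell A A) (eps : cell B B),
    src eta = id1 A /\ tgt eta = comp1 g f /\ invertible eta /\
    src eps = comp1 f g /\ tgt eps = id1 B /\ invertible eps.

Definition injective_equivalence (C : TwoCat) (A B : obj C) (f : hom A B) : Prop :=
  equivalence C A B f /\ exists r : hom B A, comp1 r f = id1 A.

Definition retract_equivalence (C : TwoCat) (A B : obj C) (f : hom A B) : Prop :=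
  equivalence C A B f /\ exists s : hom B A, comp1 f s = id1 B.

Definition normal_retract_equivalence (C : TwoCat) (A B : obj C) (f : hom A B) : Prop :=
  retract_equivalence C A B f /\ normal_isofibration C A B f.

Definition reflects {L K : TwoCat} (U : TwoFunctor L K)
    (P : forall (C : TwoCat) (A B : obj C), hom A B -> Prop) : Prop :=
  forall (A B : obj L) (f : hom A B), P K _ _ (F1 U f) -> P L A B f.

(* Main.v *)
Require Import Defs.
From Stdlib Require Import IndefiniteDescription ProofIrrelevance.


Ltac getax C := destruct (tc_ax C) as (H1&H2&H3&H4&H5&H6&H7&H8&H9&H10&H11&H12&H13&H14&H15&H16&H17&H18&H19&H20).

Lemma cidr {C : TwoCat} {A B : obj C} (f : hom A B) : comp1 f (id1 A) = f.
Proof. getax C. apply H1. Qed.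
Lemma cidl {C : TwoCat} {A B : obj C} (f : hom A B) : comp1 (id1 B) f = f.
Proof. getax C. apply H2. Qed.
Lemma cassoc {C : TwoCat} {A B C' D : obj C} (f : hom A B) (g : hom B C') (h : hom C' D) :
  comp1 (comp1 h g) f = comp1 h (comp1 g f).
Proof. getax C. symmetry; apply H3. Qed.
Lemma src_id2 {C : TwoCat} {A B : obj C} (f : hom A B) : src (id2 f) = f.
Proof. getax C. apply H4. Qed.
Lemma tgt_id2 {C : TwoCat} {A B : obj C} (f : hom A B) : tgt (id2 f) = f.
Proof. getax C. apply H4. Qed.
Lemma src_vc {C : TwoCat} {A B : obj C} (a b : cell A B) : tgt a = src b -> src (vcomp b a) = src a.
Proof. getax C. intro; apply H5; auto. Qed.
Lemma tgt_vc {C : TwoCat} {A B : obj C} (a b : cell A B) : tgt a = src b -> tgt (vcomp b a) = tgt b.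
Proof. getax C. intro; apply H5; auto. Qed.
Lemma vc_idr {C : TwoCat} {A B : obj C} (a : cell A B) x : src a = x -> vcomp a (id2 x) = a.
Proof. getax C. intros <-; apply H6. Qed.
Lemma vc_idl {C : TwoCat} {A B : obj C} (a : cell A B) x : tgt a = x -> vcomp (id2 x) a = a.
Proof. getax C. intros <-; apply H7. Qed.
Lemma vc_assoc {C : TwoCat} {A B : obj C} (a b c : cell A B) : tgt a = src b -> tgt b = src c ->
  vcomp c (vcomp b a) = vcomp (vcomp c b) a.
Proof. getax C. apply H8. Qed.
Lemma src_lw {C : TwoCat} {A B C' : obj C} (h : hom B C') (a : cell A B) : src (lwhisk h a) = comp1 h (src a).
Proof. getax C. apply H9. Qed.
Lemma tgt_lw {C : TwoCat} {A B C' : obj C} (h : hom B C') (a : cell A B) : tgt (lwhisk h a) = comp1 h (tgt a).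
Proof. getax C. apply H9. Qed.
Lemma src_rw {C : TwoCat} {A B C' : obj C} (a : cell B C') (k : hom A B) : src (rwhisk a k) = comp1 (src a) k.
Proof. getax C. apply H10. Qed.
Lemma tgt_rw {C : TwoCat} {A B C' : obj C} (a : cell B C') (k : hom A B) : tgt (rwhisk a k) = comp1 (tgt a) k.
Proof. getax C. apply H10. Qed.
Lemma lw_id2 {C : TwoCat} {A B C' : obj C} (h : hom B C') (f : hom A B) : lwhisk h (id2 f) = id2 (comp1 h f).
Proof. getax C. apply H11. Qed.
Lemma rw_id2 {C : TwoCat} {A B C' : obj C} (f : hom B C') (k : hom A B) : rwhisk (id2 f) k = id2 (comp1 f k).
Proof. getax C. apply H12. Qed.
Lemma lw_vc {C : TwoCat} {A B C' : obj C} (h : hom B C') (a b : cell A B) : tgt a = src b ->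
  lwhisk h (vcomp b a) = vcomp (lwhisk h b) (lwhisk h a).
Proof. getax C. apply H13. Qed.
Lemma rw_vc {C : TwoCat} {A B C' : obj C} (a b : cell B C') (k : hom A B) : tgt a = src b ->
  rwhisk (vcomp b a) k = vcomp (rwhisk b k) (rwhisk a k).
Proof. getax C. apply H14. Qed.
Lemma lw_id1 {C : TwoCat} {A B : obj C} (a : cell A B) : lwhisk (id1 B) a = a.
Proof. getax C. apply H15. Qed.
Lemma rw_id1 {C : TwoCat} {A B : obj C} (a : cell A B) : rwhisk a (id1 A) = a.
Proof. getax C. apply H16. Qed.
Lemma lw_comp {C : TwoCat} {A B C' D : obj C} (h : hom B C') (h' : hom C' D) (a : cell A B) :
  lwhisk (comp1 h' h) a = lwhisk h' (lwhisk h a).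
Proof. getax C. apply H17. Qed.
Lemma rw_comp {C : TwoCat} {A B C' D : obj C} (k' : hom A B) (k : hom B C') (a : cell C' D) :
  rwhisk a (comp1 k k') = rwhisk (rwhisk a k) k'.
Proof. getax C. apply H18. Qed.
Lemma lw_rw {C : TwoCat} {A B C' D : obj C} (k : hom A B) (a : cell B C') (h : hom C' D) :
  lwhisk h (rwhisk a k) = rwhisk (lwhisk h a) k.
Proof. getax C. apply H19. Qed.
Lemma interchange {C : TwoCat} {A B C' : obj C} (a : cell A B) (b : cell B C') :
  vcomp (lwhisk (tgt b) a) (rwhisk b (src a)) = vcomp (rwhisk b (tgt a)) (lwhisk (src b) a).
Proof. getax C. apply H20. Qed.

Ltac getfx U := destruct (tf_ax _ _ U) as (G1&G2&G3&G4&G5&G6&G7).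
Section F.
Context {L K : TwoCat} (U : TwoFunctor L K).
Lemma F1_id (A : obj L) : F1 U (id1 A) = id1 (F0 U A).
Proof. getfx U. apply G1. Qed.
Lemma F1_comp (A B C : obj L) (g : hom B C) (f : hom A B) : F1 U (comp1 g f) = comp1 (F1 U g) (F1 U f).
Proof. getfx U. apply G2. Qed.
Lemma src_F2 (A B : obj L) (a : cell A B) : src (F2 U a) = F1 U (src a).
Proof. getfx U. apply G3. Qed.
Lemma tgt_F2 (A B : obj L) (a : cell A B) : tgt (F2 U a) = F1 U (tgt a).
Proof. getfx U. apply G3. Qed.
Lemma F2_id (A B : obj L) (f : hom A B) : F2 U (id2 f) = id2 (F1 U f).
Proof. getfx U. apply G4. Qed.
Lemma F2_vc (A B : obj L) (a b : cell A B) : tgt a = src b -> F2 U (vcomp b a) = vcomp (F2 U b) (F2 U a).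
Proof. getfx U. apply G5. Qed.
Lemma F2_lw (A B C : obj L) (h : hom B C) (a : cell A B) : F2 U (lwhisk h a) = lwhisk (F1 U h) (F2 U a).
Proof. getfx U. apply G6. Qed.
Lemma F2_rw (A B C : obj L) (a : cell B C) (k : hom A B) : F2 U (rwhisk a k) = rwhisk (F2 U a) (F1 U k).
Proof. getfx U. apply G7. Qed.
End F.

Hint Rewrite @cidr @cidl @cassoc @F1_id @F1_comp : cat.

Ltac hyp_rw :=
  match goal with
  | H : src ?x = _ |- context [src ?x] => rewrite H
  | H : tgt ?x = _ |- context [tgt ?x] => rewrite H
  end.

Lemma comp_hyp {C : TwoCat} {A B C' X : obj C} (a : hom B C') (b : hom A B) (c : hom A C') :
  comp1 a b = c -> forall x : hom X A, comp1 a (comp1 b x) = comp1 c x.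
Proof. intros <- x. symmetry; apply cassoc. Qed.

Ltac hyp1_rw :=
  match goal with
  | H : forall (X : _) (x : _), comp1 _ (comp1 _ x) = x |- _ => rewrite H
  | H : comp1 _ _ = _ |- _ => rewrite H
  | H : comp1 _ _ = _ |- _ => rewrite (comp_hyp _ _ _ H)
  end.

Ltac st :=
  repeat first [ rewrite src_id2 | rewrite tgt_id2 | rewrite src_lw | rewrite tgt_lw
               | rewrite src_rw | rewrite tgt_rw | rewrite src_F2 | rewrite tgt_F2
               | (rewrite src_vc by st) | (rewrite tgt_vc by st) | hyp_rw
               | progress (autorewrite with cat) | hyp1_rw ];
  try reflexivity.

Definition isinv {C : TwoCatData} {A B : obj C} (a b : cell A B) : Prop :=
  src b = tgt a /\ tgt b = src a /\ vcomp b a = id2 (src a) /\ vcomp a b = id2 (tgt a).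

Lemma inv_ex {C : TwoCat} {A B : obj C} (a : cell A B) : invertible a <-> exists b, isinv a b.
Proof. reflexivity. Qed.

Lemma isinv_sym {C : TwoCat} {A B : obj C} (a b : cell A B) : isinv a b -> isinv b a.
Proof. intros (h1&h2&h3&h4); unfold isinv; rewrite h1, h2; auto. Qed.

Lemma isinv_inv {C : TwoCat} {A B : obj C} (a b : cell A B) : isinv a b -> invertible b.
Proof. intros H; exists a; apply isinv_sym; auto. Qed.
Lemma isinv_inv' {C : TwoCat} {A B : obj C} (a b : cell A B) : isinv a b -> invertible a.
Proof. intros H; exists b; auto. Qed.

Lemma isinv_uniq {C : TwoCat} {A B : obj C} (a b c : cell A B) : isinv a b -> isinv a c -> b = c.
Proof.
  intros (h1&h2&h3&h4) (k1&k2&k3&k4).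
  rewrite <- (vc_idr b (tgt a)) by auto. rewrite <- k4.
  rewrite vc_assoc by (try rewrite k1; auto). rewrite h3. apply vc_idl. auto.
Qed.

Lemma isinv_id {C : TwoCat} {A B : obj C} (f : hom A B) : isinv (id2 f) (id2 f).
Proof. unfold isinv; rewrite !src_id2, !tgt_id2, vc_idl by apply tgt_id2; auto. Qed.

Lemma isinv_lw {C : TwoCat} {A B C' : obj C} (h : hom B C') (a b : cell A B) :
  isinv a b -> isinv (lwhisk h a) (lwhisk h b).
Proof.
  intros (h1&h2&h3&h4); unfold isinv. rewrite !src_lw, !tgt_lw, h1, h2.
  rewrite <- !lw_vc by auto. rewrite h3, h4, !lw_id2; auto.
Qed.
Lemma isinv_rw {C : TwoCat} {A B C' : obj C} (k : hom A B) (a b : cell B C') :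
  isinv a b -> isinv (rwhisk a k) (rwhisk b k).
Proof.
  intros (h1&h2&h3&h4); unfold isinv. rewrite !src_rw, !tgt_rw, h1, h2.
  rewrite <- !rw_vc by auto. rewrite h3, h4, !rw_id2; auto.
Qed.
Lemma isinv_F {L K : TwoCat} (U : TwoFunctor L K) {A B : obj L} (a b : cell A B) :
  isinv a b -> isinv (F2 U a) (F2 U b).
Proof.
  intros (h1&h2&h3&h4); unfold isinv. rewrite !src_F2, !tgt_F2, h1, h2.
  rewrite <- !F2_vc by auto. rewrite h3, h4, !F2_id; auto.
Qed.
Lemma isinv_vc {C : TwoCat} {A B : obj C} (a a' b b' : cell A B) :
  isinv a a' -> isinv b b' -> tgt a = src b -> isinv (vcomp b a) (vcomp a' b').
Proof.
  intros (h1&h2&h3&h4) (k1&k2&k3&k4) e; unfold isinv.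
  assert (e' : tgt b' = src a') by congruence.
  rewrite !src_vc, !tgt_vc by auto. split; [auto|split;[auto|split]].
  - rewrite vc_assoc by (rewrite ?tgt_vc, ?src_vc; congruence).
    rewrite <- (vc_assoc b b' a') by congruence. rewrite k3, <- e, vc_idr by congruence. auto.
  - rewrite vc_assoc by (rewrite ?tgt_vc, ?src_vc; congruence).
    rewrite <- (vc_assoc a' a b) by congruence. rewrite h4, e, vc_idr by congruence. auto.
Qed.

Lemma inv_lw {C : TwoCat} {A B C' : obj C} (h : hom B C') (a : cell A B) : invertible a -> invertible (lwhisk h a).
Proof. intros [b H]; exists (lwhisk h b); apply isinv_lw; auto. Qed.
Lemma inv_rw {C : TwoCat} {A B C' : obj C} (k : hom A B) (a : cell B C') : invertible a -> invertible (rwhisk a k).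
Proof. intros [b H]; exists (rwhisk b k); apply isinv_rw; auto. Qed.
Lemma inv_F {L K : TwoCat} (U : TwoFunctor L K) {A B : obj L} (a : cell A B) : invertible a -> invertible (F2 U a).
Proof. intros [b H]; exists (F2 U b); apply isinv_F; auto. Qed.
Lemma inv_vc {C : TwoCat} {A B : obj C} (a b : cell A B) : invertible a -> invertible b -> tgt a = src b -> invertible (vcomp b a).
Proof. intros [a' H] [b' H'] e; exists (vcomp a' b'); apply isinv_vc; auto. Qed.
Lemma inv_id {C : TwoCat} {A B : obj C} (f : hom A B) : invertible (id2 f).
Proof. exists (id2 f); apply isinv_id. Qed.

Section Lift.
Context {L K : TwoCat} (U : TwoFunctor L K) (HD : hom_discrete_isofibrations U).

Lemma lift_tgt {A B : obj L} (f : hom A B) (t : cell (F0 U A) (F0 U B)) :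
  tgt t = F1 U f -> invertible t -> exists a, tgt a = f /\ invertible a /\ F2 U a = t.
Proof. intros e i. destruct (HD A B f t e i) as [a [Ha _]]. eauto. Qed.

Lemma lift_uniq_tgt {A B : obj L} (a b : cell A B) :
  tgt a = tgt b -> invertible a -> invertible b -> F2 U a = F2 U b -> a = b.
Proof.
  intros e ia ib E.
  destruct (HD A B (tgt a) (F2 U a) (tgt_F2 U _ _ a) (inv_F U a ia)) as [x [Hx Hu]].
  transitivity x; [symmetry|]; apply Hu; auto.
Qed.

Lemma lift_src {A B : obj L} (g : hom A B) (t : cell (F0 U A) (F0 U B)) :
  src t = F1 U g -> invertible t -> exists a, src a = g /\ invertible a /\ F2 U a = t.
Proof.
  intros e [t' Ht].
  destruct (lift_tgt g t') as (a&h1&h2&h3).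
  - destruct Ht as (?&?&?&?); congruence.
  - eapply isinv_inv; eauto.
  - destruct h2 as [a' Ha]. exists a'. destruct (Ha) as (k1&k2&k3&k4). split; [congruence|split].
    + eapply isinv_inv; eauto.
    + eapply isinv_uniq. apply (isinv_F U _ _ Ha). rewrite h3. apply isinv_sym; auto.
Qed.

Lemma lift_uniq_src {A B : obj L} (a b : cell A B) :
  src a = src b -> invertible a -> invertible b -> F2 U a = F2 U b -> a = b.
Proof.
  intros e [a' Ha] [b' Hb] E.
  assert (a' = b').
  { apply lift_uniq_tgt.
    - destruct Ha as (?&?&?&?), Hb as (?&?&?&?); congruence.
    - eapply isinv_inv; eauto.
    - eapply isinv_inv; eauto.
    - eapply isinv_uniq. apply (isinv_F U _ _ Ha). rewrite E. apply isinv_F; auto. }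
  subst b'. eapply isinv_uniq; apply isinv_sym; eauto.
Qed.

Lemma idcell_reflect {A B : obj L} (a : cell A B) (f : hom A B) :
  tgt a = f -> invertible a -> F2 U a = id2 (F1 U f) -> src a = f.
Proof.
  intros e i E. assert (a = id2 f).
  { apply lift_uniq_tgt; [rewrite tgt_id2; auto|auto|apply inv_id|rewrite E, F2_id; auto]. }
  rewrite H; apply src_id2.
Qed.

Lemma reflect_repr : reflects U repr_isofibration.
Proof.
  intros A B f Hf X g h al e1 e2 i.
  destruct (Hf (F0 U X) (F1 U g) (F1 U h) (F2 U al)) as (h''&be&b1&b2&b3&b4).
  - rewrite src_F2, e1, F1_comp; auto.
  - rewrite tgt_F2, e2; auto.
  - apply inv_F; auto.
  - destruct (lift_src g be b1 b3) as (a&a1&a2&a3).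
    exists (tgt a), a. split; [auto|split;[auto|split;[auto|]]].
    apply lift_uniq_src; auto.
    + rewrite src_lw; congruence.
    + apply inv_lw; auto.
    + rewrite F2_lw, a3; auto.
Qed.

Lemma cl_congr {A B : obj K} (f : hom A B) (cl : cleavage_data f) X g1 g2 al1 al2 p1 q1 p2 q2 :
  g1 = g2 -> al1 = al2 -> cl X g1 al1 p1 q1 = cl X g2 al2 p2 q2.
Proof. intros <- <-. rewrite (proof_irrelevance _ p1 p2), (proof_irrelevance _ q1 q2). auto. Qed.

Lemma reflect_normal : reflects U normal_isofibration.
Proof.
  intros A B f [Hr [clK [[Hc1 Hc2] Hc3]]]. split; [apply reflect_repr; auto|].
  assert (P : forall X (g : hom X A) (al : cell X B), src al = comp1 f g -> src (F2 U al) = comp1 (F1 U f) (F1 U g)).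
  { intros; rewrite src_F2, H, F1_comp; auto. }
  assert (Ex : forall X (g : hom X A) (al : cell X B) (p : src al = comp1 f g) (q : invertible al),
     exists a, src a = g /\ invertible a /\ F2 U a = clK (F0 U X) (F1 U g) (F2 U al) (P X g al p) (inv_F U al q)).
  { intros. apply lift_src; [apply Hc1|apply Hc1]. }
  exists (fun X g al p q => proj1_sig (constructive_indefinite_description _ (Ex X g al p q))).
  split; [split|].
  - intros X g al p q. destruct (constructive_indefinite_description _ (Ex X g al p q)) as (a&a1&a2&a3); simpl.
    split; [auto|split;[auto|]].
    destruct (Hc1 _ _ _ (P X g al p) (inv_F U al q)) as (c1&c2&c3).
    apply lift_uniq_src; auto.
    + rewrite src_lw, a1; auto.
    + apply inv_lw; auto.
    + rewrite F2_lw, a3; auto.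
  - intros Y X k g al p q p' q'.
    destruct (constructive_indefinite_description _ (Ex Y _ _ p' q')) as (a&a1&a2&a3); simpl.
    destruct (constructive_indefinite_description _ (Ex X _ _ p q)) as (b&b1&b2&b3); simpl.
    apply lift_uniq_src; auto.
    + rewrite src_rw, b1; auto.
    + apply inv_rw; auto.
    + rewrite a3, F2_rw, b3.
      assert (pp : src (rwhisk (F2 U al) (F1 U k)) = comp1 (F1 U f) (comp1 (F1 U g) (F1 U k))).
      { rewrite src_rw, (P _ g al p). autorewrite with cat; auto. }
      rewrite <- (Hc2 _ _ (F1 U k) _ _ _ _ pp (inv_rw _ _ (inv_F U al q))).
      apply cl_congr; [apply F1_comp|apply F2_rw].
  - intros X g p q.
    destruct (constructive_indefinite_description _ (Ex X g _ p q)) as (a&a1&a2&a3); simpl.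
    apply lift_uniq_src; auto.
    + rewrite src_id2; auto.
    + apply inv_id.
    + rewrite a3, F2_id.
      assert (pp : src (id2 (comp1 (F1 U f) (F1 U g))) = comp1 (F1 U f) (F1 U g)) by apply src_id2.
      rewrite <- (Hc3 _ _ pp (inv_id _)). apply cl_congr; auto. rewrite F2_id, F1_comp; auto.
Qed.
End Lift.

Lemma sec_adjust {C : TwoCat} {A B : obj C} (f : hom A B) (g : hom B A) (eta : cell A A) (etai : cell A A)
  (eps epsi : cell B B) (s : hom B A) :
  src eta = id1 A -> tgt eta = comp1 g f -> isinv eta etai ->
  src eps = comp1 f g -> tgt eps = id1 B -> isinv eps epsi ->
  comp1 f s = id1 B ->
  exists d : cell B A, src d = s /\ tgt d = g /\ invertible d /\ vcomp eps (lwhisk f d) = id2 (id1 B).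
Proof.
  intros es et ei ps pt pi Hfs.
  assert (Hfs' : forall X (x : hom X B), comp1 f (comp1 s x) = x).
  { intros; rewrite <- cassoc, Hfs; apply cidl. }
  destruct ei as (ei1&ei2&ei3&ei4). destruct pi as (pi1&pi2&pi3&pi4).
  remember (vcomp etai (rwhisk eta (comp1 s f))) as k0 eqn:Ek0.
  assert (k0s : src k0 = comp1 s f) by (subst k0; st).
  assert (k0t : tgt k0 = id1 A) by (subst k0; st).
  assert (k0i : invertible k0).
  { subst k0; apply inv_vc; [apply inv_rw; exists etai; repeat split; auto
                              | exists eta; repeat split; congruence | st]. }
  destruct (inv_lw f k0 k0i) as [ph' Hph].
  destruct Hph as (h1&h2&h3&h4).
  rewrite src_lw, tgt_lw in *.
  remember (vcomp k0 (lwhisk s ph')) as k eqn:Ek.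
  assert (ks : src k = comp1 s f) by (subst k; st).
  assert (kt : tgt k = id1 A) by (subst k; st).
  assert (ki : invertible k).
  { subst k; apply inv_vc; auto; [apply inv_lw; exists (lwhisk f k0); repeat split; try (rewrite ?src_lw, ?tgt_lw; congruence); auto | st]. }
  assert (Hk : lwhisk f k = id2 f).
  { subst k. rewrite lw_vc by st. rewrite <- lw_comp, Hfs, lw_id1, h4, k0t, cidr. auto. }
  exists (vcomp (rwhisk k g) (lwhisk s epsi)).
  split; [st|split;[st|split]].
  - apply inv_vc; [apply inv_lw; exists eps; repeat split; congruence| apply inv_rw; auto| st].
  - rewrite lw_vc by st. rewrite lw_rw, Hk, rw_id2, <- lw_comp, Hfs, lw_id1.
    rewrite vc_idl by congruence. rewrite pi4, pt. auto.
Qed.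

Lemma ret_adjust {C : TwoCat} {A B : obj C} (f : hom A B) (g : hom B A) (eta : cell A A) (etai : cell A A)
  (eps epsi : cell B B) (r : hom B A) :
  src eta = id1 A -> tgt eta = comp1 g f -> isinv eta etai ->
  src eps = comp1 f g -> tgt eps = id1 B -> isinv eps epsi ->
  comp1 r f = id1 A ->
  exists d : cell B A, src d = r /\ tgt d = g /\ invertible d /\ vcomp etai (rwhisk d f) = id2 (id1 A).
Proof.
  intros es et ei ps pt pi Hrf.
  assert (Hrf' : forall X (x : hom X A), comp1 r (comp1 f x) = x).
  { intros; rewrite <- cassoc, Hrf; apply cidl. }
  destruct ei as (ei1&ei2&ei3&ei4). destruct pi as (pi1&pi2&pi3&pi4).
  remember (vcomp eps (lwhisk (comp1 f r) epsi)) as k0 eqn:Ek0.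
  assert (k0s : src k0 = comp1 f r) by (subst k0; st).
  assert (k0t : tgt k0 = id1 B) by (subst k0; st).
  assert (k0i : invertible k0).
  { subst k0; apply inv_vc; [apply inv_lw; exists eps; repeat split; congruence
                              | exists epsi; repeat split; auto | st]. }
  destruct (inv_rw f k0 k0i) as [ph' Hph].
  destruct Hph as (h1&h2&h3&h4).
  rewrite src_rw, tgt_rw in *.
  remember (vcomp k0 (rwhisk ph' r)) as k eqn:Ek.
  assert (ks : src k = comp1 f r) by (subst k; st).
  assert (kt : tgt k = id1 B) by (subst k; st).
  assert (ki : invertible k).
  { subst k; apply inv_vc; auto; [apply inv_rw; exists (rwhisk k0 f); repeat split; try (rewrite ?src_rw, ?tgt_rw; congruence); auto | st]. }
  assert (Hk : rwhisk k f = id2 f).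
  { subst k. rewrite rw_vc by st. rewrite <- rw_comp, Hrf, rw_id1, h4, k0t, cidl. auto. }
  exists (vcomp (lwhisk g k) (rwhisk eta r)).
  split; [st|split;[st|split]].
  - apply inv_vc; [apply inv_rw; exists etai; repeat split; auto| apply inv_lw; auto| st].
  - rewrite rw_vc by st. rewrite <- lw_rw, Hk, lw_id2, <- rw_comp, Hrf, rw_id1.
    rewrite vc_idl by congruence. rewrite ei3, es. auto.
Qed.

Lemma equiv_comp {C : TwoCat} {A B C' : obj C} (f1 : hom A B) (f2 : hom B C') :
  equivalence C A B f1 -> equivalence C B C' f2 -> equivalence C A C' (comp1 f2 f1).
Proof.
  intros (g1&eta1&eps1&a1&a2&a3&a4&a5&a6) (g2&eta2&eps2&b1&b2&b3&b4&b5&b6).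
  exists (comp1 g1 g2), (vcomp (lwhisk g1 (rwhisk eta2 f1)) eta1), (vcomp eps2 (lwhisk f2 (rwhisk eps1 g2))).
  repeat split; try st.
  - apply inv_vc; [auto|apply inv_lw, inv_rw; auto|st].
  - apply inv_vc; [apply inv_lw, inv_rw; auto|auto|st].
Qed.

Lemma equiv_iso {C : TwoCat} {A B : obj C} (f f' : hom A B) (th : cell A B) :
  equivalence C A B f -> src th = f -> tgt th = f' -> invertible th -> equivalence C A B f'.
Proof.
  intros (g&eta&eps&a1&a2&a3&a4&a5&a6) t1 t2 [th' (i1&i2&i3&i4)].
  exists g, (vcomp (lwhisk g th) eta), (vcomp eps (rwhisk th' g)).
  repeat split; try st.
  - apply inv_vc; [auto|apply inv_lw; eexists; repeat split; eauto|st].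
  - apply inv_vc; [apply inv_rw; exists th; repeat split; try congruence; auto|auto|st].
Qed.

Lemma equiv_iso_section {C : TwoCat} {A B : obj C} (f : hom A B) :
  equivalence C A B f -> repr_isofibration C A B f -> exists s, comp1 f s = id1 B.
Proof.
  intros (g&eta&eps&a1&a2&a3&a4&a5&a6) Hi.
  destruct (Hi B g (id1 B) eps a4 a5 a6) as (h'&al'&c1&c2&c3&c4).
  exists h'. rewrite <- c2, <- tgt_lw, c4; auto.
Qed.

Section PL.
Context {C : TwoCat} {A B : obj C} (f : hom A B) (P : obj C) (u : hom P A) (v : hom P B) (lam : cell P B)
  (HP : is_pseudolimit f P u v lam).

Lemma PL_2cell_unique X (s1 s2 : cell X P) :
  src s1 = src s2 -> tgt s1 = tgt s2 -> lwhisk u s1 = lwhisk u s2 -> lwhisk v s1 = lwhisk v s2 -> s1 = s2.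
Proof.
  destruct HP as (l1&l2&l3&l4&l5). intros e1 e2 e3 e4.
  assert (Eq : vcomp (lwhisk f (lwhisk u s1)) (rwhisk lam (src s1)) = vcomp (rwhisk lam (tgt s1)) (lwhisk v s1)).
  { pose proof (interchange s1 lam) as I. rewrite l1, l2, lw_comp in I. exact I. }
  assert (H5 := l5 X (src s1) (tgt s1) (lwhisk u s1) (lwhisk v s1)).
  rewrite !src_lw, !tgt_lw in H5.
  destruct (H5 eq_refl eq_refl eq_refl eq_refl Eq) as [x [_ Hu]].
  transitivity x; [symmetry|]; apply Hu; repeat split; auto; congruence.
Qed.

Lemma PL_i : exists i : hom A P, comp1 u i = id1 A /\ comp1 v i = f /\ rwhisk lam i = id2 f /\
   equivalence C A P i /\ equivalence C P A u.
Proof.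
  pose proof PL_2cell_unique as Uq.
  destruct HP as (l1&l2&(lami&li)&l4&l5).
  destruct (l4 A (id1 A) f (id2 f)) as [i [(i1&i2&i3) _]]; try st; try apply inv_id.
  destruct li as (m1&m2&m3&m4).
  destruct (l5 P (id1 P) (comp1 i u) (id2 u) lam) as [e [(e1&e2&e3&e4) _]]; try st.
  { rewrite lw_id2, rw_id1, rw_comp, i3, rw_id2, !vc_idl; st. }
  destruct (l5 P (comp1 i u) (id1 P) (id2 u) lami) as [e' [(e1'&e2'&e3'&e4') _]]; try st.
  { rewrite lw_id2, rw_id1, rw_comp, i3, rw_id2, m4, l2, vc_idl; st. }
  assert (E1 : vcomp e' e = id2 (id1 P)).
  { apply Uq; try st. rewrite lw_vc, e3, e3', lw_id2, vc_idl; st.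
    rewrite lw_vc, e4, e4', m3, lw_id2, l1; st. }
  assert (E2 : vcomp e e' = id2 (comp1 i u)).
  { apply Uq; try st. rewrite lw_vc, e3, e3', lw_id2, vc_idl; st.
    rewrite lw_vc, e4, e4', m4, lw_id2, l2; st. }
  exists i. repeat split; auto.
  - exists u, (id2 (id1 A)), e'. repeat split; try st.
    + apply inv_id.
    + exists e. repeat split; try st; auto; rewrite ?e1', ?e2'; auto.
  - exists i, e, (id2 (id1 A)). repeat split; try st.
    + exists e'. repeat split; try st; auto; rewrite ?e1, ?e2; auto.
    + apply inv_id.
Qed.
End PL.

Section PLV.
Context {C : TwoCat} {A B : obj C} (f : hom A B) (P : obj C) (u : hom P A) (v : hom P B) (lam : cell P B)
  (HP : is_pseudolimit f P u v lam).

Definition Spec X (m : hom X P) (al : cell X B) (s : cell X P) : Prop :=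
  src s = m /\ lwhisk u s = id2 (comp1 u m) /\ lwhisk v s = al /\ comp1 u (tgt s) = comp1 u m /\
  comp1 v (tgt s) = tgt al /\ vcomp (rwhisk lam (tgt s)) al = rwhisk lam m.

Lemma spec_ex X m al : src al = comp1 v m -> invertible al -> exists s, Spec X m al s.
Proof.
  intros p [al' (a1&a2&a3&a4)].
  destruct HP as (l1&l2&l3&l4&l5).
  destruct (l4 X (comp1 u m) (tgt al) (vcomp (rwhisk lam m) al')) as [m' [(n1&n2&n3) _]].
  - st.
  - st.
  - apply inv_vc; [exists al; repeat split; congruence|apply inv_rw; auto|st].
  - assert (Eq : vcomp (lwhisk f (id2 (comp1 u m))) (rwhisk lam m) = vcomp (rwhisk lam m') al).
    { rewrite n3, lw_id2, vc_idl by st. rewrite <- vc_assoc by st. rewrite a3, vc_idr; st. }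
    destruct (l5 X m m' (id2 (comp1 u m)) al) as [s [(s1&s2&s3&s4) _]]; try st; try exact Eq.
    exists s. unfold Spec. rewrite s2. repeat split; auto.
    rewrite n3, <- vc_assoc by st. rewrite a3, vc_idr; st.
Qed.

Lemma spec_uniq X m al s1 s2 : src al = comp1 v m -> invertible al -> Spec X m al s1 -> Spec X m al s2 -> s1 = s2.
Proof.
  intros p [al' (a1&a2&a3&a4)] (b1&b2&b3&b4&b5&b6) (c1&c2&c3&c4&c5&c6).
  pose proof (PL_2cell_unique f P u v lam HP) as Uq.
  destruct HP as (l1&l2&l3&l4&l5).
  assert (T : tgt s1 = tgt s2).
  { destruct (l4 X (comp1 u m) (tgt al) (vcomp (rwhisk lam m) al')) as [m' [_ Hu]].
    - st.
    - st.
    - apply inv_vc; [exists al; repeat split; congruence|apply inv_rw; auto|st].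
    - transitivity m'; [symmetry|]; apply Hu; repeat split; auto.
      + rewrite <- b6, <- vc_assoc by st. rewrite a4, vc_idr; st.
      + rewrite <- c6, <- vc_assoc by st. rewrite a4, vc_idr; st. }
  apply Uq; congruence.
Qed.

Lemma spec_inv X m al s : src al = comp1 v m -> invertible al -> Spec X m al s -> invertible s.
Proof.
  intros p [al' (a1&a2&a3&a4)] (b1&b2&b3&b4&b5&b6).
  pose proof (PL_2cell_unique f P u v lam HP) as Uq.
  destruct HP as (l1&l2&l3&l4&l5).
  assert (Eq : vcomp (lwhisk f (id2 (comp1 u m))) (rwhisk lam (tgt s)) = vcomp (rwhisk lam m) al').
  { rewrite lw_id2, vc_idl by st. rewrite <- b6, <- vc_assoc by st. rewrite a4, vc_idr; st. }
  destruct (l5 X (tgt s) m (id2 (comp1 u m)) al') as [s' [(s1&s2&s3&s4) _]]; try st; try exact Eq.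
  exists s'. split; [auto|split; [congruence|split]].
  - apply Uq; try st. rewrite lw_vc, b2, s3, lw_id2, vc_idl by st; st.
    rewrite lw_vc, b3, s4, a3, lw_id2 by st; st.
  - apply Uq; try st. rewrite lw_vc, b2, s3, lw_id2, vc_idl by st; st.
    rewrite lw_vc, b3, s4, a4, lw_id2 by st; st.
Qed.

Lemma PL_v_normal : normal_isofibration C P B v.
Proof.
  split.
  - intros X g h al e1 e2 i. destruct (spec_ex X g al e1 i) as [s Hs].
    exists (tgt s), s. pose proof (spec_inv _ _ _ _ e1 i Hs). destruct Hs as (b1&b2&b3&_). auto.
  - exists (fun X m al p q => proj1_sig (constructive_indefinite_description _ (spec_ex X m al p q))).
    split; [split|].
    + intros X g al p q. destruct (constructive_indefinite_description _ _) as [s Hs]; simpl.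
      pose proof (spec_inv _ _ _ _ p q Hs). destruct Hs as (b1&b2&b3&_). auto.
    + intros Y X k g al p q p' q'.
      destruct (constructive_indefinite_description _ (spec_ex Y _ _ p' q')) as [s Hs]; simpl.
      destruct (constructive_indefinite_description _ (spec_ex X _ _ p q)) as [t Ht]; simpl.
      apply (spec_uniq Y (comp1 g k) (rwhisk al k)); auto.
      destruct Ht as (b1&b2&b3&b4&b5&b6). destruct HP as (l1&l2&l3&l4&l5).
      unfold Spec. repeat split.
      * st.
      * rewrite lw_rw, b2, rw_id2, cassoc; auto.
      * rewrite lw_rw, b3; auto.
      * st.
      * st.
      * rewrite tgt_rw, rw_comp, <- rw_vc by st. rewrite b6, <- rw_comp; auto.
    + intros X g p q.
      destruct (constructive_indefinite_description _ _) as [s Hs]; simpl.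
      apply (spec_uniq X g (id2 (comp1 v g))); auto.
      destruct HP as (l1&l2&l3&l4&l5).
      unfold Spec. rewrite !lw_id2, !tgt_id2. repeat split; try st.
      rewrite vc_idr; st.
Qed.
End PLV.

Section Main.
Context {L K : TwoCat} (U : TwoFunctor L K) (HD : hom_discrete_isofibrations U).

Lemma t12 : reflects U equivalence -> reflects U retract_equivalence.
Proof.
  intros H1 A B f [He [s' Hs']].
  pose proof (H1 A B f He) as Hf. split; auto.
  destruct Hf as (g&eta&eps&a1&a2&[etai Hei]&a4&a5&[epsi Hpi]).
  destruct (sec_adjust (F1 U f) (F1 U g) (F2 U eta) (F2 U etai) (F2 U eps) (F2 U epsi) s')
    as (d&d1&d2&d3&d4); try st; try (apply isinv_F; auto); auto.
  destruct (lift_tgt U HD g d) as (d'&e1&e2&e3); [rewrite d2; auto|auto|].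
  exists (src d').
  assert (Hs : src (vcomp eps (lwhisk f d')) = id1 B).
  { apply (idcell_reflect U HD).
    - st.
    - apply inv_vc; [apply inv_lw; auto|exists epsi; auto|st].
    - rewrite F2_vc by st. rewrite F2_lw, e3, d4, F1_id; auto. }
  rewrite src_vc, src_lw in Hs by st. exact Hs.
Qed.

Lemma t14 : reflects U equivalence -> reflects U injective_equivalence.
Proof.
  intros H1 A B f [He [r' Hr']].
  pose proof (H1 A B f He) as Hf. split; auto.
  destruct Hf as (g&eta&eps&a1&a2&[etai Hei]&a4&a5&[epsi Hpi]).
  destruct (ret_adjust (F1 U f) (F1 U g) (F2 U eta) (F2 U etai) (F2 U eps) (F2 U epsi) r')
    as (d&d1&d2&d3&d4); try st; try (apply isinv_F; auto); auto.
  destruct (lift_tgt U HD g d) as (d'&e1&e2&e3); [rewrite d2; auto|auto|].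
  exists (src d').
  assert (Hs : src (vcomp etai (rwhisk d' f)) = id1 A).
  { destruct Hei as (i1&i2&i3&i4).
    apply (idcell_reflect U HD).
    - st.
    - apply inv_vc; [apply inv_rw; auto|eapply isinv_inv; repeat split; eauto|st].
    - rewrite F2_vc by st. rewrite F2_rw, e3, d4, F1_id; auto. }
  destruct Hei as (i1&i2&i3&i4).
  rewrite src_vc, src_rw in Hs by st. exact Hs.
Qed.

Lemma t23 : reflects U retract_equivalence -> reflects U normal_retract_equivalence.
Proof.
  intros H2 A B f [Hr Hn]. split; [apply H2; auto|apply (reflect_normal U HD); auto].
Qed.

Lemma t31 : has_pseudolimits_of_arrows L -> preserves_pseudolimits_of_arrows U ->
  reflects U normal_retract_equivalence -> reflects U equivalence.
Proof.
  intros HL HPr H3 A B f Hf.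
  destruct (HL A B f) as (P&u&v&lam&HP).
  pose proof (HPr _ _ _ _ _ _ _ HP) as HK.
  assert (Hv : normal_retract_equivalence L P B v).
  { apply H3.
    assert (Ev : equivalence K _ _ (F1 U v)).
    { destruct (PL_i _ _ _ _ _ HK) as (i&_&_&_&_&Eu).
      pose proof (equiv_comp _ _ Eu Hf) as Efu.
      destruct HK as (l1&l2&[li Hli]&_).
      apply (equiv_iso _ _ li Efu).
      - destruct Hli as (h&_); congruence.
      - destruct Hli as (_&h&_); congruence.
      - eapply isinv_inv; eauto. }
    pose proof (PL_v_normal _ _ _ _ _ HK) as Nv.
    split; [split; [auto|]|auto].
    apply equiv_iso_section; auto. apply Nv. }
  destruct Hv as [[Ev _] _].
  destruct (PL_i _ _ _ _ _ HP) as (i&_&Hvi&_&Ei&_).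
  rewrite <- Hvi. apply equiv_comp; auto.
Qed.
End Main.

Theorem proposition3p16 (L K : TwoCat) (U : TwoFunctor L K) :
  has_pseudolimits_of_arrows L ->
  has_pseudolimits_of_arrows K ->
  preserves_pseudolimits_of_arrows U ->
  hom_discrete_isofibrations U ->
  reflects U repr_isofibration /\
  reflects U normal_isofibration /\
  (reflects U equivalence <-> reflects U retract_equivalence) /\
  (reflects U retract_equivalence <-> reflects U normal_retract_equivalence) /\
  (reflects U equivalence -> reflects U injective_equivalence).
Proof.
  intros HL _ HPr HD.
  split; [apply reflect_repr; auto|].
  split; [apply reflect_normal; auto|].
  split; [split; [apply t12; auto|intro H2; apply (t31 U HL HPr), t23; auto]|].
  split; [split; [apply t23; auto|intro H3; apply t12; auto; apply (t31 U HL HPr); auto]|].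
  apply t14; auto.
Qed.
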